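(* There is an absolute constant $C$ such that for every $\epsilon\in(0,1]$ there is an $\epsilon$-edge differentially private algorithm which, given any graph $G$, outputs a real number $\hat\rho$ with $\mathbb E[|\hat\rho-\rho(G)|]\le C\sqrt{1/\epsilon}$.
   Context: For nonempty $S\subseteq V$, $\rho(S)=|E(S)|/|S|$ with $E(S)$ the edges inside $S$, and $\rho(G)=\max_{\emptyset\ne S\subseteq V}\rho(S)$. Edge-neighboring graphs have the same vertex set and edge sets differing in exactly one edge; an algorithm is $\epsilon$-edge DP if $\Pr[\mathcal A(G)\in O]\le e^\epsilon\Pr[\mathcal A(G')\in O]$ for all edge-neighboring $G,G'$ and all output sets $O$. *)

(* Defs.v *)
From HB Require Import structures.
From mathcomp Require Import all_boot all_order all_algebra.
From mathcomp Require Import all_classical all_reals all_analysis.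
Set Implicit Arguments. Unset Strict Implicit. Unset Printing Implicit Defensive.
Import Order.TTheory GRing.Theory Num.Theory.
Local Open Scope ring_scope.

Definition is_simple_graph (n : nat) (E : {set {set 'I_n}}) : bool :=
  [forall e in E, #|e| == 2%N].

Definition graph (n : nat) := {E : {set {set 'I_n}} | is_simple_graph E}.

Definition gedges (n : nat) (G : graph n) : {set {set 'I_n}} := proj1_sig G.

Definition induced_edges (n : nat) (G : graph n) (S : {set 'I_n}) : {set {set 'I_n}} :=
  [set e in gedges G | e \subset S].

Definition density (R : realType) (n : nat) (G : graph n) (S : {set 'I_n}) : R :=
  (#|induced_edges G S|)%:R / (#|S|)%:R.

(* rho(G) = max over nonempty S of rho(S) (all values are >= 0, so the
   neutral element 0 does not affect the max for n >= 1). *)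
Definition max_density (R : realType) (n : nat) (G : graph n) : R :=
  \big[Num.max/0]_(S : {set 'I_n} | (0 < #|S|)%N) density R G S.

Definition edge_neighbors (n : nat) (G G' : graph n) : Prop :=
  #|(gedges G :\: gedges G') :|: (gedges G' :\: gedges G)| = 1%N.

Definition graph_algorithm (R : realType) :=
  forall n : nat, graph n -> probability R R.

Definition edge_DP (R : realType) (eps : R) (A : graph_algorithm R) : Prop :=
  forall (n : nat) (G G' : graph n), edge_neighbors G G' ->
  forall O : set R, measurable O ->
    (A n G O <= (expR eps)%:E * A n G' O)%E.

(* Main.v *)
Require Import Defs.
From HB Require Import structures.
From mathcomp Require Import all_boot all_order all_algebra.
From mathcomp Require Import all_classical all_reals all_analysis.
From mathcomp Require Import measurable_realfun.
From mathcomp Require Import ring lra zify.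
Import Order.TTheory GRing.Theory Num.Theory.
Local Open Scope ring_scope.

Module MT3.
Local Open Scope ring_scope.

Definition dist (k m : nat) : nat := (k - m + (m - k))%N.

Section sums.
Variables (R : realFieldType) (r : R).
Hypotheses (r0 : 0 <= r) (r1 : r <= 1).

Lemma ray_id N : (1 - r) * (\sum_(i < N) i%:R * r ^+ i) + N%:R * r ^+ N =
  \sum_(i < N.+1) r ^+ i - 1.
Proof.
elim: N => [|N IH]; first by rewrite big_ord0 big_ord1 expr0 !mul0r mulr0 addr0 subrr.
rewrite big_ord_recr /= [in RHS]big_ord_recr /=.
move: IH; set S1 := \sum_(i < N) _; set S2 := \sum_(i < N.+1) _ => IH.
have -> : S2 = (1 - r) * S1 + N%:R * r ^+ N + 1 by lra.
rewrite -natr1 exprS; ring.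
Qed.

Lemma ray N : (1 - r) * (\sum_(i < N) i%:R * r ^+ i) <= \sum_(i < N) r ^+ i.
Proof.
have := ray_id N; rewrite big_ord_recr /= => H.
have h1 : r ^+ N <= 1 by rewrite exprn_ile1.
have h2 : 0 <= N%:R * r ^+ N by rewrite mulr_ge0 // exprn_ge0.
lra.
Qed.

Lemma split_dist (F : nat -> R) {m M} : (m <= M)%N ->
  \sum_(k < M.+1) F (dist k m) = \sum_(i < m) F i.+1 + \sum_(i < M.+1 - m) F i.
Proof.
move=> mM.
rewrite -[LHS](big_mkord xpredT (fun k => F (dist k m))).
rewrite (@big_cat_nat _ _ _ m 0 M.+1) //=; last by apply: leqW.
congr (_ + _).
  rewrite big_nat_rev /= add0n big_mkord.
  apply: eq_bigr => i _; have im := ltn_ord i; congr F; rewrite /dist.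
  lia.
have := big_addn 0 M.+1 m xpredT (fun i => F (dist i m)); rewrite add0n => ->.
rewrite big_mkord; apply: eq_bigr => i _; congr F.
by rewrite /dist; lia.
Qed.

Lemma dist_bound m M : (m <= M)%N ->
  (1 - r) * (\sum_(k < M.+1) (dist k m)%:R * r ^+ (dist k m))
    <= 2 * \sum_(k < M.+1) r ^+ (dist k m).
Proof.
move=> mM.
rewrite (split_dist (fun d => d%:R * r ^+ d) mM) (split_dist (fun d => r ^+ d) mM).
have hl := ray m.+1; rewrite big_ord_recl /= mul0r add0r in hl.
rewrite big_ord_recl /= expr0 in hl.
have hr := ray (M.+1 - m).
have z1 : 1 <= \sum_(i < M.+1 - m) r ^+ i.
  have : (0 < M.+1 - m)%N by lia.
  case: (M.+1 - m)%N => // N _; rewrite big_ord_recl /= expr0 lerDl.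
  by apply: sumr_ge0 => i _; rewrite exprn_ge0.
have z2 : 0 <= \sum_(i < m) r ^+ i.+1 by apply: sumr_ge0 => i _; rewrite exprn_ge0.
move: hl hr z1 z2.
set A := \sum_(i < m) _; set B := \sum_(i < M.+1 - m) _;
set C := \sum_(i < m) _; set D := \sum_(i < M.+1 - m) _.
move=> *; rewrite mulrDr; lra.
Qed.
End sums.

End MT3.
Import MT3.

Module MT1.
Local Open Scope ring_scope.

Section dens.
Variables (R : realType) (n : nat).

Lemma induced_edges_card (G : graph n) (S : {set 'I_n}) :
  (2 * #|induced_edges G S| <= #|S| * (#|S|).-1)%N.
Proof.
have sub : induced_edges G S \subset [set A : {set 'I_n} | A \subset S & #|A| == 2].
  apply/fintype.subsetP => e; rewrite !inE => /andP[eG eS]; rewrite eS /=.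
  by case: G eG => E /= /forallP /(_ e) /implyP H /H.
have := subset_leq_card sub; rewrite cards_draws bin2 => H.
apply: (leq_trans (leq_mul (leqnn 2) H)).
by rewrite -[X in (_ <= X)%N](odd_double_half (#|S| * (#|S|).-1)) -mul2n leq_addl.
Qed.

Lemma density_ge0 (G : graph n) (S : {set 'I_n}) : 0 <= density R G S.
Proof. by rewrite /density divr_ge0. Qed.

Lemma density_le (G : graph n) (S : {set 'I_n}) : (0 < #|S|)%N ->
  2 * density R G S + 1 <= (#|S|)%:R.
Proof.
move=> S0; rewrite /density.
have H := induced_edges_card G S.
have H' : (((2 * #|induced_edges G S|)%N)%:R : R) <= ((#|S| * (#|S|).-1)%N)%:R.
  by rewrite ler_nat.
have eq1 : ((#|S|).-1%:R : R) = (#|S|)%:R - 1 by rewrite -subn1 natrB.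
rewrite !natrM eq1 in H'.
have sp : (0:R) < (#|S|)%:R by rewrite ltr0n.
move: H'; set s := (#|S|)%:R; set e := (#|_|)%:R => H'.
have ex : e = (e / s) * s by rewrite divfK ?gt_eqF.
rewrite ex in H'; move: H'; move: (e / s) => x H'.
idtac.
nra.
Qed.

Lemma max_density_ge0 (G : graph n) : 0 <= max_density R G.
Proof.
rewrite /max_density; apply: (big_ind (fun x => 0 <= x)) => //.
  by move=> x y; rewrite le_max => -> .
by move=> S _; exact: density_ge0.
Qed.

Lemma max_density_ge (G : graph n) (S : {set 'I_n}) : (0 < #|S|)%N -> density R G S <= max_density R G.
Proof.
move=> S0; rewrite /max_density.
exact: (le_bigmax_cond _ (P := fun S : {set 'I_n} => (0 < #|S|)%N)).
Qed.

Lemma max_density_attained (G : graph n) :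
  max_density R G = 0 \/ exists S : {set 'I_n}, (0 < #|S|)%N /\ max_density R G = density R G S.
Proof.
rewrite /max_density; apply: (big_ind (fun x => x = 0 \/ exists S : {set 'I_n}, (0 < #|S|)%N /\ x = density R G S)).
- by left.
- move=> x y Hx Hy; rewrite /Num.max; case: ifP => _; by [].
- by move=> S S0; right; exists S.
Qed.

End dens.

End MT1.
Import MT1.

Module MT2.
Local Open Scope ring_scope.

Section sens.
Variables (R : realType) (n : nat).

Lemma edge_card (G G' : graph n) (S : {set 'I_n}) : edge_neighbors G G' ->
  (#|induced_edges G' S| <= #|induced_edges G S| + 1)%N.
Proof.
rewrite /edge_neighbors => H.
have sub : induced_edges G' S \subset induced_edges G S :|: (gedges G' :\: gedges G).
  apply/fintype.subsetP => e; rewrite !inE => /andP[eG eS].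
  by case: (e \in gedges G) => //=; rewrite ?eS ?eG ?orbT.
apply: (leq_trans (subset_leq_card sub)); apply: (leq_trans (leq_card_setU _ _)).
rewrite leq_add2l -H; apply: subset_leq_card; exact: finset.subsetUr.
Qed.

Lemma sens (G G' : graph n) : edge_neighbors G G' ->
  max_density R G' ^+ 2 <= max_density R G ^+ 2 + 1.
Proof.
move=> nb; have r0 := max_density_ge0 R _ G.
case: (max_density_attained R _ G') => [->|[S [S0 ->]]].
  by rewrite expr0n /= addr_ge0 // sqr_ge0.
have := max_density_ge R _ G _ S0.
have := density_le R _ G' _ S0.
have := density_ge0 R _ G' S.
have := @edge_card _ _ S nb.
rewrite /density -(ler_nat R) natrD => Hc.
have sp : (0:R) < (#|S|)%:R by rewrite ltr0n.
move: Hc; set s := (#|S|)%:R; set e' := (#|induced_edges G' S|)%:R;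
  set e := (#|induced_edges G S|)%:R; set r := max_density R G => Hc d0 dl dr.
have t0 : 0 < s^-1 by rewrite invr_gt0.
have st : s * s^-1 = 1 by rewrite mulfV ?gt_eqF.
have h1 : e' / s <= e / s + s^-1.
  by rewrite -[X in _ <= _ + X]mul1r -mulrDl ler_pM2r.
move: h1 dl dr d0; move: (e' / s) => d'; move: (e / s) => d h1 dl dr d0.
move: h1 t0 st; move: (s^-1) => t h1 t0 st.
have rg : d' - t <= r by lra.
have ts : 2 * d' * t <= 1 - t by nra.
case: (lerP (d' - t) 0) => h.
  have : d' <= t by lra.
  have : t <= 1 by nra.
  nra.
nra.
Qed.

End sens.

End MT2.
Import MT2.

Module MT4.
Local Open Scope ring_scope.
Set Implicit Arguments. Unset Strict Implicit.

Section mech.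
Variables (R : realType) (eps : R) (M m : nat).

Definition rr : R := expR (- (eps / 2)).
Definition wt (k : nat) : R := rr ^+ dist k m.
Definition Zs : R := \sum_(k < M.+1) wt k.
Definition pk (k : nat) : R := wt k / Zs.
Definition yk (k : nat) : R := Num.sqrt (k%:R).

Lemma rr_gt0 : 0 < rr. Proof. exact: expR_gt0. Qed.
Lemma wt_gt0 k : 0 < wt k. Proof. by rewrite /wt exprn_gt0 // rr_gt0. Qed.
Lemma Zs_gt0 : 0 < Zs.
Proof. by rewrite /Zs big_ord_recl /= ltr_wpDr ?wt_gt0 //; apply: sumr_ge0 => i _; exact/ltW/wt_gt0. Qed.
Lemma pk_ge0 k : 0 <= pk k.
Proof. by rewrite /pk divr_ge0 // ltW // ?wt_gt0 ?Zs_gt0. Qed.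

Definition pnn (k : nat) : {nonneg R} := NngNum (pk_ge0 k).

Definition mech := msum (fun k => mscale (pnn k) (\d_(yk k))) M.+1.

Lemma mechE A : mech A = (\sum_(k < M.+1) (pk k)%:E * \d_(yk k) A)%E.
Proof. by []. Qed.

Lemma mech_setT : mech setT = 1%E.
Proof.
rewrite mechE.
under eq_bigr do rewrite diracT mule1.
by rewrite sumEFin /pk -mulr_suml -/Zs mulfV // gt_eqF // Zs_gt0.
Qed.

HB.instance Definition _ := Measure.on mech.
HB.instance Definition _ := Measure_isProbability.Build _ _ R mech mech_setT.

End mech.

Section mech_props.
Variables (R : realType) (eps : R) (M : nat).
Hypothesis eps0 : 0 <= eps.

Lemma rr_le1 : rr eps <= 1.
Proof. by rewrite /rr expR_le1 oppr_le0 divr_ge0. Qed.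

Lemma wt_ratio m m' k : (m <= m'.+1)%N -> (m' <= m.+1)%N -> rr eps * wt eps m k <= wt eps m' k.
Proof.
move=> h h'; rewrite /wt -exprS.
have r0 := ltW (rr_gt0 eps).
apply: (ler_wiXn2l r0 rr_le1).
rewrite /dist; lia.
Qed.

Lemma Zs_ratio m m' : (m <= m'.+1)%N -> (m' <= m.+1)%N -> rr eps * Zs eps M m <= Zs eps M m'.
Proof.
move=> h h'; rewrite /Zs mulr_sumr; apply: ler_sum => k _; exact: wt_ratio.
Qed.

Lemma rr2 : (rr eps ^+ 2)^-1 = expR eps.
Proof. by rewrite /rr -expRM_natl -expRN; congr expR; field. Qed.

Lemma pk_ratio m m' k : (m <= m'.+1)%N -> (m' <= m.+1)%N ->
  pk eps M m k <= expR eps * pk eps M m' k.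
Proof.
move=> h1 h2; rewrite /pk -rr2.
have r0 := rr_gt0 eps; have z0 := Zs_gt0 eps M m; have z0' := Zs_gt0 eps M m'.
have a := wt_ratio k h1 h2; have b := Zs_ratio h2 h1.
have u0 := wt_gt0 eps m' k.
move: a b z0 z0' u0; set u := wt eps m k; set u' := wt eps m' k;
  set Z := Zs eps M m; set Z' := Zs eps M m'; set r := rr eps => a b z0 z0' u0.
have e1 : u <= u' / r by rewrite ler_pdivlMr // mulrC.
have e2 : 1 <= Z / (r * Z') by rewrite ler_pdivlMr ?mul1r // mulr_gt0.
rewrite ler_pdivrMr //.
have -> : r ^- 2 * (u' / Z') * Z = (u' / r) * (Z / (r * Z')).
  by field; rewrite !gt_eqF.
apply: le_trans e1 _; rewrite -{1}[u' / r]mulr1 ler_wpM2l // divr_ge0 // ltW //.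
Qed.

Lemma mech_dp m m' (O : set R) : (m <= m'.+1)%N -> (m' <= m.+1)%N ->
  (mech eps M m O <= (expR eps)%:E * mech eps M m' O)%E.
Proof.
move=> h1 h2; rewrite !mechE ge0_sume_distrr; last by move=> k _; rewrite mule_ge0 // lee_fin pk_ge0.
apply: lee_sum => k _; rewrite !diracE muleA -!EFinM lee_fin ler_wpM2r //.
exact: pk_ratio.
Qed.

Lemma mech_int (m : nat) (f : _ -> \bar R) : measurable_fun setT f -> (forall x, (0 <= f x)%E) ->
  (\int[mech eps M m]_x f x = \sum_(k < M.+1) (pk eps M m k)%:E * f (yk R k))%E.
Proof.
move=> mf f0; rewrite /mech ge0_integral_measure_sum //; apply: eq_bigr => k _.
by rewrite ge0_integral_mscale // integral_dirac // diracT mul1e.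
Qed.

End mech_props.

End MT4.
Import MT4.

Module MT5.
Local Open Scope ring_scope.
Set Implicit Arguments. Unset Strict Implicit.

Section err.
Variable (R : realType).

Lemma sqrt_diff (x y a : R) : 0 <= x -> 0 <= y -> 0 < a ->
  `|Num.sqrt x - Num.sqrt y| <= a + `|x - y| / a.
Proof.
move=> x0 y0 a0.
have u0 := sqrtr_ge0 x; have v0 := sqrtr_ge0 y.
have ex : x = Num.sqrt x ^+ 2 by rewrite sqr_sqrtr.
have ey : y = Num.sqrt y ^+ 2 by rewrite sqr_sqrtr.
rewrite [in X in _ <= _ + `|X| / _]ex [in X in _ <= _ + `|X| / _]ey.
move: u0 v0; move: (Num.sqrt x) (Num.sqrt y) => u v u0 v0.
have -> : u ^+ 2 - v ^+ 2 = (u - v) * (u + v) by ring.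
rewrite normrM (ger0_norm (addr_ge0 u0 v0)).
have d0 : 0 <= `|u - v| by [].
case: (lerP (u + v) a) => h.
  have : `|u - v| <= u + v.
    by have := ler_normB u v; rewrite (ger0_norm u0) (ger0_norm v0).
  move=> h2; have : 0 <= `|u - v| * (u + v) / a by rewrite divr_ge0 ?mulr_ge0 ?addr_ge0 // (ltW a0).
  by move=> H; apply: (le_trans h2); apply: (le_trans h); rewrite lerDl.
have : `|u - v| <= `|u - v| * (u + v) / a.
  rewrite ler_pdivlMr //; apply: ler_wpM2l => //. exact: ltW.
by move=> H; apply: (le_trans H); rewrite lerDr; exact: ltW.
Qed.

Lemma dist_real (k m : nat) : (dist k m)%:R = `|k%:R - m%:R : R|.
Proof.
rewrite /dist; case: (leqP k m) => h.
  have e : (k - m = 0)%N by apply/eqP; rewrite subn_eq0.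
  rewrite e add0n (natrB _ h) distrC ger0_norm //.
  by rewrite subr_ge0 ler_nat.
have e : (m - k = 0)%N by apply/eqP; rewrite subn_eq0 ltnW.
have h' := ltnW h.
rewrite e addn0 (natrB _ h') ger0_norm //.
by rewrite subr_ge0 ler_nat.
Qed.

Lemma one_minus_rr (eps : R) : 0 < eps -> eps <= 1 -> eps / 4 <= 1 - rr eps.
Proof.
move=> e0 e1; rewrite /rr expRN.
have h := expR_ge1Dx (eps / 2).
have p : 0 < expR (eps / 2) by exact: expR_gt0.
rewrite -(ler_pM2r p) mulrBl mulVf ?gt_eqF // mul1r.
move: h p; move: (expR (eps / 2)) => E h p.
nra.
Qed.

End err.

Section err2.
Variable (R : realType).

Lemma err_bound (eps h : R) (M : nat) : 0 < eps -> eps <= 1 -> 0 <= h ->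
  (Num.truncn h <= M)%N ->
  \sum_(k < M.+1) pk eps M (Num.truncn h) k * `|yk R k - Num.sqrt h|
    <= 10 * Num.sqrt (1 / eps).
Proof.
move=> e0 e1 h0 hM.
set m := Num.truncn h.
have /andP[hm1 hm2] := truncn_itv h0; rewrite -/m in hm1 hm2.
set a := Num.sqrt (1 / eps).
have a0 : 0 < a by rewrite sqrtr_gt0 divr_gt0.
have aa : a * a = 1 / eps by rewrite -expr2 sqr_sqrtr // divr_ge0 // ltW.
have Z0 := Zs_gt0 eps M m.
have sumP : \sum_(k < M.+1) pk eps M m k = 1.
  by rewrite /pk -mulr_suml -/(Zs eps M m) mulfV // gt_eqF.
have sumD : \sum_(k < M.+1) pk eps M m k * (dist k m)%:R <= 8 / eps.
  have eqD : \sum_(k < M.+1) pk eps M m k * (dist k m)%:R =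
      (\sum_(k < M.+1) (dist k m)%:R * rr eps ^+ dist k m) / Zs eps M m.
    rewrite mulr_suml; apply: eq_bigr => k _; rewrite /pk /wt; field.
    by rewrite gt_eqF.
  rewrite eqD.
  have db := @dist_bound _ _ (ltW (rr_gt0 eps)) (rr_le1 (ltW e0)) _ _ hM.
  have om := one_minus_rr e0 e1.
  move: db; set S := \sum_(k < M.+1) _; rewrite -/(Zs eps M m) => db.
  have S0 : 0 <= S.
    apply: sumr_ge0 => k _; rewrite mulr_ge0 // exprn_ge0 //; exact/ltW/rr_gt0.
  rewrite ler_pdivrMr //.
  have q : 0 < 1 - rr eps by apply: lt_le_trans om; rewrite divr_gt0.
  rewrite -(ler_pM2l q); apply: (le_trans db).
  rewrite mulrA; apply: ler_wpM2r; first exact: ltW.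
  have e2 : eps / 4 * (8 / eps) = 2 by field; rewrite (gt_eqF e0).
  rewrite -{1}e2; apply: ler_wpM2r => //; by rewrite divr_ge0 // ltW.
have term : forall k : 'I_M.+1, pk eps M m k * `|yk R k - Num.sqrt h| <=
    pk eps M m k * (a + a^-1) + pk eps M m k * (dist k m)%:R / a.
  move=> k; rewrite -mulrA -mulrDr; apply: ler_wpM2l; first exact: pk_ge0.
  have sd := sqrt_diff (ler0n R k) h0 a0.
  apply: (le_trans sd); rewrite -addrA lerD2l.
  have d1 : `|k%:R - h| <= (dist k m)%:R + 1.
    rewrite dist_real; apply: (le_trans (ler_distD (m%:R) _ _)); rewrite lerD2l.
    rewrite distrC ger0_norm ?subr_ge0 //.
    by rewrite lerBlDl natr1; exact: ltW.
  rewrite -(ler_pM2r a0) mulrDl !divfK ?mulVf ?(gt_eqF a0) //.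
  by rewrite [1 + _]addrC.
apply: (le_trans (ler_sum _ (fun k _ => term k))).
rewrite big_split /= -mulr_suml sumP mul1r -mulr_suml.
have ia : a^-1 = a * eps.
  apply: (mulfI (lt0r_neq0 a0)); rewrite mulfV ?(gt_eqF a0) // mulrA aa.
  by rewrite mul1r mulVf // gt_eqF.
have ieps : 8 / eps = 8 * (a * a) by rewrite aa mul1r.
rewrite ieps in sumD.
have ae : a * eps <= a by rewrite ler_piMr // ltW.
have H : (\sum_(k < M.+1) pk eps M m k * (dist k m)%:R) / a <= 8 * a.
  by rewrite ler_pdivrMr // -mulrA.
rewrite ia in H *.
apply: (le_trans (lerD (lerD (lexx a) ae) H)).
have -> : (10 : R) * a = a + a + 8 * a by ring.
by rewrite lerD2r lerD2l.
Qed.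
End err2.

End MT5.
Import MT5.

Definition mG (R : realType) (n : nat) (G : graph n) : nat :=
  Num.truncn (max_density R G ^+ 2).

Definition alg (R : realType) (eps : R) : graph_algorithm R :=
  fun n G => mech eps (n * n) (@mG R n G).

Lemma mG_le (R : realType) n (G : graph n) : (@mG R n G <= n * n)%N.
Proof.
rewrite /mG truncn_le_nat.
have r0 := max_density_ge0 R _ G.
have rn : max_density R G <= n%:R.
  case: (max_density_attained R _ G) => [->|[S [S0 ->]]]; first exact: ler0n.
  have := density_le R _ G _ S0; have := density_ge0 R _ G S.
  have : (#|S| <= n)%N by have := max_card S; rewrite card_ord.
  rewrite -(ler_nat R); move: (density R G S) => d; lra.
have : max_density R G ^+ 2 <= (n * n)%:R.
  by rewrite natrM expr2; apply: ler_pM.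
rewrite -natr1; move: (max_density R G ^+ 2) => x; lra.
Qed.

Lemma nb_sym n (G G' : graph n) : edge_neighbors G G' -> edge_neighbors G' G.
Proof. by rewrite /edge_neighbors finset.setUC. Qed.

Lemma mG_nb (R : realType) n (G G' : graph n) : edge_neighbors G G' ->
  (@mG R n G' <= (@mG R n G).+1)%N.
Proof.
move=> nb; rewrite /mG truncn_le_nat.
have := @sens R n G G' nb.
have := truncnS_gt (max_density R G ^+ 2).
move: (max_density R G' ^+ 2) (max_density R G ^+ 2) => x y.
rewrite -!natr1; lra.
Qed.

Theorem mainTheorem15 (R : realType) :
  exists C : R, forall eps : R, 0 < eps -> eps <= 1 ->
    exists A : graph_algorithm R,
      edge_DP eps A /\
      forall (n : nat) (G : graph n),
        (\int[A n G]_x (`|x - max_density R G|)%:E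
           <= (C * Num.sqrt (1 / eps))%:E)%E.
Proof.
exists 10 => eps e0 e1; exists (@alg R eps); split.
  move=> n G G' nb O mO; rewrite /alg.
  apply: mech_dp; first exact: ltW.
    exact: (@mG_nb R n G' G (@nb_sym n G G' nb)).
  exact: (@mG_nb R n G G' nb).
move=> n G; rewrite /alg mech_int //; last first.
  apply/measurable_EFinP; apply: measurableT_comp => //.
  exact: measurable_funB.
under eq_bigr do rewrite -EFinM.
rewrite sumEFin lee_fin.
have r0 := max_density_ge0 R _ G.
have := err_bound e0 e1 (sqr_ge0 (max_density R G)) (@mG_le R n G).
by rewrite sqrtr_sqr ger0_norm.
Qed.
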